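(* Let $a,b$ be positive integers and $c$ an integer with $-b<c<a$, and suppose that $E_{(-b,c,a)}^{(\infty,\infty,\infty)}=\bigoplus_{r\in\mathbb{Z}}A_r$ is of full support. Then for every monomial $w\in A_r$ there exist infinitely many monomials in $A_r$ with pairwise disjoint supports whose length equals the length of $w$.
   Context: $E$ is the Grassmann algebra of an infinite-dimensional vector space with basis $e_1,e_2,\dots$; monomials are $1$ and $e_{i_1}\cdots e_{i_k}$ with $i_1<\dots<i_k$, of length $k$ and support $\{e_{i_1},\dots,e_{i_k}\}$. For pairwise distinct integers $r_1,r_2,r_3$, $E_{(r_1,r_2,r_3)}^{(\infty,\infty,\infty)}=\bigoplus_rA_r$ is the $\mathbb{Z}$-grading obtained by splitting $\{e_i\}$ into three disjoint infinite sets, giving elements of the $j$-th set degree $r_j$ and monomials the sum of the degrees of their factors ($A_r$ is spanned by the monomials of degree $r$). Full support means $A_r\ne0$ for every $r\in\mathbb{Z}$. *)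

(* Defs.v *)
From HB Require Import structures.
From mathcomp Require Import all_boot all_order all_algebra.
From mathcomp Require Import finmap.
Set Implicit Arguments. Unset Strict Implicit. Unset Printing Implicit Defensive.
Import Order.TTheory GRing.Theory Num.Theory.
Local Open Scope ring_scope.
Local Open Scope fset_scope.

(* Generators e_n of the Grassmann algebra are indexed by n : nat.
   A monomial e_{i_1}...e_{i_k} (i_1<...<i_k), or 1, is identified with its
   support {i_1,...,i_k} : {fset nat}; its length is the cardinality.
   The splitting of {e_n} into three disjoint sets is a map
   part : nat -> 'I_3 (e_n lies in the (part n)-th set). *)

Definition infinite_split (part : nat -> 'I_3) : Prop :=
  forall (j : 'I_3) (N : nat), exists n : nat, (N <= n)%N /\ part n = j.

Definition gen_deg (r1 r2 r3 : int) (part : nat -> 'I_3) (n : nat) : int :=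
  nth 0 [:: r1; r2; r3] (part n).

Definition mon_deg (r1 r2 r3 : int) (part : nat -> 'I_3) (w : {fset nat}) : int :=
  \sum_(n <- w) gen_deg r1 r2 r3 part n.

Definition mon_len (w : {fset nat}) : nat := #|` w|.

(* A_r is spanned by monomials of degree r; A_r <> 0 iff such a monomial exists *)
Definition full_support (r1 r2 r3 : int) (part : nat -> 'I_3) : Prop :=
  forall r : int, exists w : {fset nat}, mon_deg r1 r2 r3 part w = r.

(* Main.v *)
Require Import Defs.
From HB Require Import structures.
From mathcomp Require Import all_boot all_order all_algebra.
From mathcomp Require Import finmap.
Import Order.TTheory GRing.Theory Num.Theory.
Local Open Scope ring_scope.
Local Open Scope fset_scope.

Theorem lemma4p6 (a b c : int) (part : nat -> 'I_3) :
  0 < a -> 0 < b -> - b < c -> c < a ->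
  infinite_split part ->
  full_support (- b) c a part ->
  forall (r : int) (w : {fset nat}),
    mon_deg (- b) c a part w = r ->
    exists f : nat -> {fset nat},
      (forall i : nat, mon_deg (- b) c a part (f i) = r /\
                       mon_len (f i) = mon_len w) /\
      (forall i j : nat, i <> j -> f i `&` f j = fset0).
Proof.
move=> _ _ _ _ Hinf _ r w Hw.
have H' : forall (j : 'I_3) (M : nat), exists n, (M <= n)%N && (part n == j).
  move=> j M; have [n [h1 h2]] := Hinf j M; exists n; by rewrite h1 h2 eqxx.
pose nx j M := ex_minn (H' j M).
have nxP : forall j M, (M <= nx j M)%N /\ part (nx j M) = j.
  move=> j M; rewrite /nx; case: ex_minnP => n /andP[h1 /eqP h2] _; by [].
pose s (j : 'I_3) := fix s k := if k is k'.+1 then nx j (s k').+1 else nx j 0%N.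
have sP : forall j k, part (s j k) = j.
  by move=> j [|k] /=; rewrite (nxP _ _).2.
have sinc : forall j, {homo s j : k l / (k < l)%N}.
  move=> j; apply: homo_ltn; first exact: ltn_trans.
  by move=> k /=; exact: (nxP _ _).1.
have sinj : forall j, injective (s j).
  move=> j k l e; apply/eqP; case: (ltngtP k l) => // h.
    by move: (sinc j _ _ h); rewrite e ltnn.
  by move: (sinc j _ _ h); rewrite e ltnn.
pose K := (\max_(x <- w) x).+1.
have xK : forall x, x \in w -> (x < K)%N.
  move=> x xw; rewrite ltnS; exact: (leq_bigmax_seq x) .
have key : forall i j x y, x \in w -> y \in w ->
    s (part x) (i * K + x)%N = s (part y) (j * K + y)%N -> i = j /\ x = y.
  move=> i j x y xw yw e.
  have pe : part x = part y by rewrite -(sP (part x) (i * K + x)%N) e sP.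
  move: e; rewrite pe => /sinj e.
  have Kp : (0 < K)%N by [].
  have ei : i = j.
    have := congr1 (fun n => n %/ K)%N e => /=.
    by rewrite !divnMDl // !divn_small ?xK // !addn0.
  split=> //; move: e; rewrite ei; exact: addnI.
pose g i x := s (part x) (i * K + x)%N.
exists (fun i => [fset g i x | x in w]); split.
  move=> i.
  have ginj : {in w &, injective (g i)}.
    by move=> x y xw yw /(key _ _ _ _ xw yw) [].
  split.
    rewrite /mon_deg big_imfset //=; rewrite -Hw /mon_deg.
    apply: eq_bigr => x _; by rewrite /gen_deg /g sP.
  by rewrite /mon_len; apply/eqP/card_in_imfsetP.
move=> i j ij; apply/eqP; rewrite -fsubset0; apply/fsubsetP => z.
rewrite inE => /andP[/imfsetP [x xw ->] /imfsetP [y yw /(key _ _ _ _ xw yw) [e _]]].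
by [].
Qed.
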